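(* Let $(N,v)$ be a balanced game. Every coalition that is minimal with respect to inclusion in $\mathscr{E}(N,v)$ is strictly vital-exact.
   Context: A game $(N,v)$: $N$ finite nonempty, $v:2^N\to\mathbb{R}$, $v(\varnothing)=0$; $x(S)=\sum_{i\in S}x_i$. Core: $C(N,v)=\{x\in\mathbb{R}^N\mid x(N)=v(N),\ x(S)\ge v(S)\ \forall S\subseteq N\}$; the game is balanced if $C(N,v)\ne\varnothing$. A coalition (nonempty $S\subseteq N$) is effective if $x(S)=v(S)$ for all $x\in C(N,v)$; $\mathscr{E}(N,v)$ is the set of effective coalitions. A coalition $S$ is strictly vital-exact if there exists $x\in C(N,v)$ with $x(S)=v(S)$ and $x(T)>v(T)$ for all $T\in 2^S\setminus\{\varnothing,S\}$. *)

(* Defs.v *)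
From mathcomp Require Import all_boot all_order all_algebra.
Set Implicit Arguments. Unset Strict Implicit. Unset Printing Implicit Defensive.
Import Order.TTheory GRing.Theory Num.Theory.
Local Open Scope ring_scope.

Section Game.
Variables (R : realFieldType) (N : finType).

Definition xsum (x : N -> R) (S : {set N}) : R := \sum_(i in S) x i.

Definition in_core (v : {set N} -> R) (x : N -> R) : Prop :=
  xsum x [set: N] = v [set: N] /\ forall S : {set N}, v S <= xsum x S.

Definition balanced (v : {set N} -> R) : Prop := exists x, in_core v x.

Definition effective (v : {set N} -> R) (S : {set N}) : Prop :=
  S != set0 /\ forall x, in_core v x -> xsum x S = v S.

Definition minimal_effective (v : {set N} -> R) (S : {set N}) : Prop :=
  effective v S /\ forall T : {set N}, T \proper S -> ~ effective v T.

Definition strictly_vital_exact (v : {set N} -> R) (S : {set N}) : Prop :=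
  exists x, in_core v x /\ xsum x S = v S /\
    forall T : {set N}, T \subset S -> T != set0 -> T != S -> v T < xsum x T.

End Game.

(* Main.v *)
Require Import Defs.
From mathcomp Require Import all_boot all_order all_algebra.
From Stdlib Require Import Classical.
From mathcomp Require Import ring lra.
Import Order.TTheory GRing.Theory Num.Theory.
Local Open Scope ring_scope.

Section Aux.
Variables (R : realFieldType) (N : finType) (v : {set N} -> R).

Lemma xsum_mid (x y : N -> R) T :
  xsum (fun i => (x i + y i) / 2) T = (xsum x T + xsum y T) / 2.
Proof. by rewrite /xsum -big_split /= mulr_suml. Qed.

Lemma core_mid x y : in_core v x -> in_core v y ->
  in_core v (fun i => (x i + y i) / 2).
Proof.
move=> [hx1 hx2] [hy1 hy2]; split.
  rewrite xsum_mid hx1 hy1; field; lra.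
move=> T; rewrite xsum_mid; have := hx2 T; have := hy2 T.
move=> a b; rewrite ler_pdivlMr //; lra.
Qed.

Lemma mid_lt (a b c : R) : c < a -> c <= b -> c < (a + b) / 2.
Proof. move=> h1 h2; rewrite ltr_pdivlMr //; lra. Qed.

Lemma mid_lt' (a b c : R) : c <= a -> c < b -> c < (a + b) / 2.
Proof. move=> h1 h2; rewrite ltr_pdivlMr //; lra. Qed.

Lemma strict_all (S : {set N}) (hbal : balanced v)
  (hmin : forall T : {set N}, T \proper S -> ~ effective v T) (s : seq {set N}) :
  (forall T, T \in s -> T \proper S /\ T != set0) ->
  exists x, in_core v x /\ forall T, T \in s -> v T < xsum x T.
Proof.
elim: s => [|T s IH] hs.
  by case: hbal => x hx; exists x; split.
have [x [hx hxs]] : exists x, in_core v x /\ forall T, T \in s -> v T < xsum x T.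
  by apply: IH => T' hT'; apply: hs; rewrite inE hT' orbT.
have [hTp hT0] := hs T (mem_head _ _).
have [y [hy hyT]] : exists y, in_core v y /\ v T < xsum y T.
  apply: NNPP => hn; apply: (hmin T hTp); split => // y hy.
  apply: NNPP => hne; apply: hn; exists y; split => //.
  rewrite lt_def; apply/andP; split; last by case: hy => _ ->.
  by apply/eqP => e; apply: hne.
exists (fun i => (x i + y i) / 2); split; first exact: core_mid.
move=> T'; rewrite inE => /orP [/eqP -> | hT'].
  rewrite xsum_mid; apply: mid_lt' => //; by case: hx => _ ->.
rewrite xsum_mid; apply: mid_lt; first exact: hxs.
by case: hy => _ ->.
Qed.
End Aux.

Theorem mainTheorem8 (R : realFieldType) (N : finType) (v : {set N} -> R)
  (hN : (0 < #|N|)%N) (hv0 : v set0 = 0) (hbal : balanced v)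
  (S : {set N}) (hS : minimal_effective v S) :
  strictly_vital_exact v S.
Proof.
case: hS => [[hS0 hSe] hmin].
set L := enum [set T : {set N} | (T \proper S) && (T != set0)].
have hL : forall T, T \in L -> T \proper S /\ T != set0.
  by move=> T; rewrite /L mem_enum inE => /andP [].
have [x [hx hxs]] := @strict_all R N v S hbal hmin L hL.
exists x; split => //; split; first exact: hSe.
move=> T hTS hT0 hTne; apply: hxs.
by rewrite /L mem_enum inE properEneq hTne hTS hT0.
Qed.
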